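(* Let $n\ge1$, let $L_1,\dots,L_N$ be complex $n\times n$ matrices, let $\pi_1,\dots,\pi_n$ be mutually orthogonal rank-one orthogonal projectors on $\mathbb{C}^n$, let $w_{jk}:=\sum_{\alpha=1}^N \mathrm{Tr}(\pi_j L_\alpha\pi_k L_\alpha^\dagger)$ for $j\neq k$, and let $\Omega$ be the matrix with $\Omega_{jk}=w_{jk}$ ($j\ne k$) and $\Omega_{kk}=-\sum_{l\ne k}w_{lk}$. Let $N_1,\dots,N_{n_B}$ be the vertex sets of the basins of $G_\Omega$ and $N_B=\bigcup_\eta N_\eta$. Then the kernel of $\Omega^T$ is spanned by the linearly independent vectors $$\kappa_\eta := \Big(\sum_{\tau\in T_B(G_\Omega)} W(\tau)\Big)\sum_{j\in N_\eta} e_j + \sum_{l\notin N_B}\ \sum_{\tau\in T_B(G_\Omega,\eta,l)} W(\tau)\, e_l,\qquad \eta=1,\dots,n_B.$$ Moreover, if $\Omega$ is time-independent and $\Lambda(t)\in\mathbb{R}^n$ solves $\frac{d}{dt}\Lambda=\Omega\Lambda$, then each quantity $\kappa_\eta^T\Lambda(t)$ is constant in $t$.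
   Context: $G_\Omega$ is the directed graph on $\{1,\dots,n\}$ with a directed edge from $k$ to $j$ of weight $w_{jk}$ for each $j\ne k$ with $w_{jk}\ne0$. A basin is a strongly connected component with no edge leaving it. $e_j$ is the $j$-th standard basis vector. $T_B(G_\Omega)$ is the set of spanning forests of $G_\Omega$ whose set of roots is exactly $N_B$: subgraphs containing all $n$ vertices, with no directed cycles, in which every vertex of $N_B$ has no outgoing edge and every vertex outside $N_B$ has exactly one outgoing edge (so each vertex has a directed path to a unique root in $N_B$). $T_B(G_\Omega,\eta,l)$ is the set of forests in $T_B(G_\Omega)$ in which vertex $l$ lies in a tree whose root is in $N_\eta$. For a forest $\tau$, $W(\tau)$ is the product of its edge weights, with $W(\tau)=1$ if $\tau$ has no edges. *)

(* Defs.v *)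
From HB Require Import structures.
From mathcomp Require Import all_boot all_order all_algebra.
From mathcomp Require Import complex.
From mathcomp Require Import all_classical all_reals all_analysis.
Set Implicit Arguments. Unset Strict Implicit. Unset Printing Implicit Defensive.
Import Order.TTheory GRing.Theory Num.Theory.
Local Open Scope ring_scope.
Local Open Scope complex_scope.

Section Defs.
Variable R : realType.
Variable n : nat.

Definition adjmx (A : 'M[R[i]]_n) : 'M[R[i]]_n := (map_mx conjc A)^T.

(* w_{jk} = sum_alpha Tr(pi_j L_alpha pi_k L_alpha^dagger); this trace is real,
   we take its real part to view it in R *)
Definition wgt (N : nat) (L : 'I_N -> 'M[R[i]]_n) (pi : 'I_n -> 'M[R[i]]_n)
    (j k : 'I_n) : R :=
  \sum_(a < N) complex.Re (\tr (pi j *m L a *m pi k *m adjmx (L a))).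

Definition Omega (w : 'I_n -> 'I_n -> R) : 'M[R]_n :=
  \matrix_(j, k) (if j == k then - \sum_(l | l != k) w l k else w j k).

Definition gedge (w : 'I_n -> 'I_n -> R) : rel 'I_n :=
  fun k j => (j != k) && (w j k != 0).

Definition is_basin (w : 'I_n -> 'I_n -> R) (S : {set 'I_n}) : bool :=
  [exists x, S == [set y | connect (gedge w) x y && connect (gedge w) y x]]
  && [forall k in S, forall j, gedge w k j ==> (j \in S)].

Definition basins (w : 'I_n -> 'I_n -> R) : {set {set 'I_n}} :=
  [set S | is_basin w S].

Definition NB (w : 'I_n -> 'I_n -> R) : {set 'I_n} :=
  \bigcup_(S in basins w) S.

(* A spanning forest with root set NB is encoded by its parent function:
   p v is the head of the unique outgoing edge of v (v outside NB),
   and p v = v for roots (no outgoing edge). *)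
Definition fedge (w : 'I_n -> 'I_n -> R) (p : {ffun 'I_n -> 'I_n}) : rel 'I_n :=
  fun u v => (u \notin NB w) && (p u == v).

Definition is_forest (w : 'I_n -> 'I_n -> R) (p : {ffun 'I_n -> 'I_n}) : bool :=
  [forall v, (v \in NB w) ==> (p v == v)]
  && [forall v, (v \notin NB w) ==> gedge w v (p v)]
  && [forall v, ~~ [exists u, fedge w p v u && connect (fedge w p) u v]].

Definition TB (w : 'I_n -> 'I_n -> R) : {set {ffun 'I_n -> 'I_n}} :=
  [set p | is_forest w p].

Definition TBl (w : 'I_n -> 'I_n -> R) (Neta : {set 'I_n}) (l : 'I_n)
    : {set {ffun 'I_n -> 'I_n}} :=
  [set p in TB w | [exists r in Neta, connect (fedge w p) l r]].

Definition Wf (w : 'I_n -> 'I_n -> R) (p : {ffun 'I_n -> 'I_n}) : R :=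
  \prod_(v | v \notin NB w) w (p v) v.

Definition evec (j : 'I_n) : 'cV[R]_n := delta_mx j 0.

Definition kappa (w : 'I_n -> 'I_n -> R) (Neta : {set 'I_n}) : 'cV[R]_n :=
  (\sum_(t in TB w) Wf w t) *: (\sum_(j in Neta) evec j)
  + \sum_(l | l \notin NB w) (\sum_(t in TBl w Neta l) Wf w t) *: evec l.

End Defs.

(* Main.v *)
Require Import Defs.
From HB Require Import structures.
From mathcomp Require Import all_boot all_order all_algebra.
From mathcomp Require Import complex.
From mathcomp Require Import all_classical all_reals all_analysis.
From mathcomp Require Import ring.
Import Order.TTheory GRing.Theory Num.Theory.
Set Implicit Arguments. Unset Strict Implicit. Unset Printing Implicit Defensive.
Local Open Scope ring_scope.

Section Reach.
Variable n : nat.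

Inductive reach (p : 'I_n -> 'I_n) (T : {set 'I_n}) : 'I_n -> Prop :=
| reach0 x : x \in T -> reach p T x
| reachS x : reach p T (p x) -> reach p T x.

Lemma reach_unfold p T x : reach p T x <-> x \in T \/ reach p T (p x).
Proof.
split; first by case=> y; [left|right].
by case=> [/reach0|/reachS].
Qed.

Lemma reach_fix p T x : reach p T x -> p x = x -> x \in T.
Proof. by elim=> // y _ IH pyy; rewrite -pyy; apply: IH; rewrite !pyy. Qed.

Lemma reach_U p T1 T2 x : reach p (T1 :|: T2) x -> reach p T1 x \/ reach p T2 x.
Proof.
elim=> y.
  by rewrite inE => /orP[/reach0|/reach0]; [left|right].
by move=> _ [/reachS|/reachS]; [left|right].
Qed.

Lemma reach_iter p T x t : reach p T (iter t p x) -> reach p T x.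
Proof. by elim: t => //= t IH H; apply: IH; apply: reachS. Qed.

End Reach.

Section Forest.
Variable R : realType.
Variable n : nat.
Variable w : 'I_n -> 'I_n -> R.

Definition valid (p : {ffun 'I_n -> 'I_n}) :=
  forall v, (v \in NB w -> p v = v) /\ (v \notin NB w -> gedge w v (p v)).

Lemma conn_step p x y : connect (fedge w p) x y -> x != y ->
  x \notin NB w /\ connect (fedge w p) (p x) y.
Proof.
case/connectP=> [[|z s]] /=; first by move=> _ ->; rewrite eqxx.
case/andP=> /andP[xNB /eqP pxz] pth ly _; split=> //.
by apply/connectP; exists s; rewrite pxz.
Qed.

Lemma conn_NB p x y : x \in NB w -> connect (fedge w p) x y -> y = x.
Proof.
move=> xNB c; apply/eqP; rewrite eq_sym; apply/negP => /negP ne.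
by have [] := conn_step c ne; rewrite xNB.
Qed.

Lemma reach_conn p (S : {set 'I_n}) l : valid p -> S \subset NB w ->
  (exists2 r, r \in S & connect (fedge w p) l r) <-> reach p S l.
Proof.
move=> vp sS; split.
  case=> r rS /connectP[s].
  elim: s l => [|z s IH] l /=; first by move=> _ <-; exact: reach0.
  case/andP=> /andP[_ /eqP plz] pth lr.
  by apply: reachS; rewrite plz; apply: IH.
elim=> {l} [x xS|x _ [r rS c]]; first by exists x => //; exact: connect0.
exists r => //.
have [xNB|xNB] := boolP (x \in NB w).
  by have [h _] := vp x; rewrite (h xNB) in c.
apply: connect_trans c; apply: connect1; by rewrite /fedge xNB eqxx.
Qed.

Lemma forest_valid p : is_forest w p -> valid p.
Proof.
case/andP=> /andP[/forallP H1 /forallP H2] _ v; split.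
  by move=> vN; apply/eqP; exact: (implyP (H1 v)).
by move=> vN; exact: (implyP (H2 v)).
Qed.

Lemma acyclic_of_reach p : valid p -> (forall v, reach p (NB w) v) ->
  forall v, ~~ [exists u, fedge w p v u && connect (fedge w p) u v].
Proof.
move=> vp rall v; apply/negP => /existsP[u /andP[/andP[vNB /eqP pvu] cuv]].
pose Cyc x := connect (fedge w p) v x /\ connect (fedge w p) x v.
have CycN x : Cyc x -> x \notin NB w.
  by case=> _ cxv; apply/negP => xN; move: (conn_NB xN cxv) => E; move: vNB; rewrite E xN.
have CycS x : Cyc x -> Cyc (p x).
  move=> [cvx cxv]; have xN := CycN x (conj cvx cxv); split.
    by apply: connect_trans cvx _; apply: connect1; rewrite /fedge xN eqxx.
  have [exv|nxv] := eqVneq x v; first by rewrite exv pvu.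
  by have [] := conn_step cxv nxv.
have key x : reach p (NB w) x -> ~ Cyc x.
  elim=> {}x; first by move=> xN /CycN; rewrite xN.
  by move=> _ IH /CycS.
by apply: (key v (rall v)); split; exact: connect0.
Qed.

Lemma conn_iter (p : {ffun 'I_n -> 'I_n}) x : (forall t, iter t p x \notin NB w) ->
  forall s, connect (fedge w p) x (iter s p x).
Proof.
move=> H; elim=> [|s IH] /=; first exact: connect0.
apply: connect_trans IH _; apply: connect1; by rewrite /fedge H eqxx.
Qed.

Lemma reach_of_acyclic p : valid p ->
  (forall v, ~~ [exists u, fedge w p v u && connect (fedge w p) u v]) ->
  forall v, reach p (NB w) v.
Proof.
move=> vp acy v; apply: contrapT => nr.
have nit t : iter t p v \notin NB w.
  by apply/negP => H; apply: nr; apply: (reach_iter (t:=t)); exact: reach0.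
pose f := fun i : 'I_n.+1 => iter i p v.
have : ~~ injectiveb f.
  apply/negP => /injectiveP inj; move: (@inj_leq _ _ f inj); by rewrite ltnn.
case/injectivePn => a [b] neq fab.
wlog ltab : a b neq fab / (a < b)%N.
  move=> W; case: (ltngtP a b) => [ab|ba|e]; first exact: (W a b neq fab ab).
    by apply: (W b a) => //; rewrite eq_sym.
  by move/val_inj: e => e; move: neq; rewrite e eqxx.
pose u := iter a p v.
have uN : u \notin NB w by exact: nit.
have itu : iter (b - a) p u = u.
  by rewrite /u -iterD subnK ?(ltnW ltab) //; rewrite /f in fab; rewrite -fab.
have : connect (fedge w p) (p u) u.
  suff: connect (fedge w p) (p u) (iter (b - a).-1 p (p u)).
    by rewrite -iterSr prednK ?subn_gt0 // itu.
  apply: conn_iter => t; by rewrite -iterSr /u -iterD.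
move=> c; move: (acy u) => /negP; apply; apply/existsP; exists (p u).
by rewrite /fedge uN eqxx.
Qed.

Lemma forestP p : is_forest w p <-> valid p /\ forall v, reach p (NB w) v.
Proof.
split.
  move=> F; have vp := forest_valid F; split => //.
  by apply: reach_of_acyclic => //; case/andP: F => _ /forallP.
case=> vp ra; apply/andP; split; last by apply/forallP; exact: acyclic_of_reach.
apply/andP; split; apply/forallP => v; apply/implyP => H; have [h1 h2] := vp v.
  by rewrite h1.
exact: h2.
Qed.

End Forest.

Section Upd.
Variable R : realType.
Variable n : nat.
Variable w : 'I_n -> 'I_n -> R.

Definition upd (q : {ffun 'I_n -> 'I_n}) (k m : 'I_n) : {ffun 'I_n -> 'I_n} :=
  [ffun v => if v == k then m else q v].

Lemma updE q k m v : upd q k m v = if v == k then m else q v.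
Proof. by rewrite ffunE. Qed.

Lemma reach_noK (q : 'I_n -> 'I_n) (T : {set 'I_n}) k : q k = k -> k \notin T -> ~ reach q T k.
Proof. by move=> qk kT /reach_fix /(_ qk); rewrite (negbTE kT). Qed.

Lemma reach_upd_fwd (q : {ffun 'I_n -> 'I_n}) k m (T : {set 'I_n}) x : q k = k -> k \notin T ->
  reach q T x -> reach (upd q k m) T x.
Proof.
move=> qk kT; elim=> {}x; first exact: reach0.
move=> rq IH; have [exk|nxk] := eqVneq x k.
  by exfalso; move: rq; rewrite exk qk; exact: reach_noK.
by apply: reachS; rewrite updE (negbTE nxk).
Qed.

Lemma L1a (q : {ffun 'I_n -> 'I_n}) k m (S : {set 'I_n}) j : q k = k -> k \notin NB w ->
  (forall v, v \in NB w -> q v = v) ->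
  reach q (NB w) j -> (reach (upd q k m) S j <-> reach q S j).
Proof.
move=> qk kN qfix; elim=> {}j.
  move=> jN; have jk : j != k by apply: contraNneq kN => <-.
  have qj := qfix j jN.
  have tj : upd q k m j = j by rewrite updE (negbTE jk).
  split=> H; [apply: reach0; exact: reach_fix H tj | apply: reach0; exact: reach_fix H qj].
move=> rq IH; have [exk|nxk] := eqVneq j k.
  by exfalso; move: rq; rewrite exk qk; exact: reach_noK.
rewrite reach_unfold [in X in _ <-> X]reach_unfold updE (negbTE nxk).
by split; case=> H; [left|right; apply/IH|left|right; apply/IH].
Qed.

Lemma L1b (q : {ffun 'I_n -> 'I_n}) k m (S : {set 'I_n}) j : q k = k -> k \notin NB w ->
  (forall v, v \in NB w -> q v = v) -> S \subset NB w ->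
  reach q [set k] j -> (reach (upd q k m) S j <-> reach (upd q k m) S m).
Proof.
move=> qk kN qfix sS.
have kS : k \notin S by apply/negP => kS; move: kN; rewrite (fintype.subsetP sS k kS).
have base : reach (upd q k m) S k <-> reach (upd q k m) S m.
  rewrite reach_unfold updE eqxx (negbTE kS).
  by split; [case|right].
elim=> {}j; first by rewrite inE => /eqP ->.
move=> rq IH; have [exk|nxk] := eqVneq j k; first by rewrite exk.
have jS : j \notin S.
  apply/negP => jS; have qj := qfix j (fintype.subsetP sS j jS).
  have := reach_fix (reachS rq) qj; rewrite inE; by rewrite (negbTE nxk).
rewrite reach_unfold updE (negbTE nxk) (negbTE jS) -IH.
by split; [case|right].
Qed.

Definition validk (q : {ffun 'I_n -> 'I_n}) k :=
  forall v, v != k -> (v \in NB w -> q v = v) /\ (v \notin NB w -> gedge w v (q v)).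

Lemma forest_upd (q : {ffun 'I_n -> 'I_n}) k m : k \notin NB w -> q k = k ->
  is_forest w (upd q k m) <->
  (validk q k /\ forall v, reach q (NB w :|: [set k]) v) /\
  (gedge w k m /\ reach q (NB w) m).
Proof.
move=> kN qk; rewrite forestP; split.
  case=> vt rt.
  have Q x : reach (upd q k m) (NB w) x -> reach q (NB w) x \/ reach q (NB w) m.
    elim=> {}x; first by left; exact: reach0.
    move=> _; have [exk|nxk] := eqVneq x k.
      by rewrite exk updE eqxx; case; right.
    rewrite updE (negbTE nxk); case=> H; [left; exact: reachS|by right].
  split; split.
  - move=> v vk; have [h1 h2] := vt v; rewrite updE (negbTE vk) in h1 h2; split=> //.
  - move=> v; elim: (rt v) => {}v.
      by move=> vN; apply: reach0; rewrite inE vN.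
    move=> _ IH; have [evk|nvk] := eqVneq v k.
      by apply: reach0; rewrite evk !inE eqxx orbT.
    by apply: reachS; have -> : q v = upd q k m v by rewrite updE (negbTE nvk).
  - by have [_ h2] := vt k; move: (h2 kN); rewrite updE eqxx.
  - by case: (Q k (rt k)) => // H; exfalso; exact: (reach_noK qk kN H).
case=> [[vq rq] [gm rm]]; split.
  move=> v; have [evk|nvk] := eqVneq v k.
    by rewrite evk updE eqxx (negbTE kN); split.
  by rewrite updE (negbTE nvk); exact: vq.
have rk : reach (upd q k m) (NB w) k.
  by apply: reachS; rewrite updE eqxx; exact: reach_upd_fwd.
move=> v; elim: (rq v) => {}v.
  rewrite inE => /orP[vN|]; first exact: reach0.
  by rewrite inE => /eqP ->.
move=> _ IH; have [evk|nvk] := eqVneq v k; first by rewrite evk.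
by apply: reachS; rewrite updE (negbTE nvk).
Qed.

End Upd.

Section Ident.
Variable R : realType.
Variable n : nat.
Variable w : 'I_n -> 'I_n -> R.

Lemma asbool_iff (P Q : Prop) : (P <-> Q) -> `[<P>] = `[<Q>].
Proof. by move=> h; rewrite (propext h). Qed.

Definition gind (p : {ffun 'I_n -> 'I_n}) (S : {set 'I_n}) j : R :=
  (`[< reach p S j >])%:R.

Lemma sum_upd (h : {ffun 'I_n -> 'I_n} -> R) k :
  \sum_p h p = \sum_(q : {ffun 'I_n -> 'I_n} | q k == k) \sum_m h (upd q k m).
Proof.
rewrite [RHS]exchange_big /= (partition_big (fun p : {ffun 'I_n -> 'I_n} => p k) xpredT) //=.
apply: eq_bigr => m _.
rewrite (reindex_onto (fun q => upd q k m) (fun p => upd p k k)) /=.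
  apply: eq_bigl => q; rewrite updE eqxx eqxx /=.
  apply/eqP/eqP => [<-|qk]; first by rewrite !updE eqxx.
  by apply/ffunP => v; rewrite !updE; case: eqVneq => // ->.
move=> p /eqP pk; apply/ffunP => v; rewrite !updE; case: eqVneq => // ->.
by rewrite pk.
Qed.

Lemma per_q (q : {ffun 'I_n -> 'I_n}) (S : {set 'I_n}) k : k \notin NB w -> S \subset NB w -> q k = k ->
  \sum_m (is_forest w (upd q k m))%:R *
     (Wf w (upd q k m) * \sum_(j | j != k) w j k * gind (upd q k m) S j)
  = \sum_m (is_forest w (upd q k m))%:R *
     (Wf w (upd q k m) * ((\sum_(j | j != k) w j k) * gind (upd q k m) S k)).
Proof.
move=> kN sS qk.
case: (asboolP (validk w q k /\ forall v, reach q (NB w :|: [set k]) v)) => [[vq rq]|H]; last first.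
  have f0 m : is_forest w (upd q k m) = false.
    by apply/negP => /(forest_upd m kN qk) [h _]; exact: H h.
  by apply: eq_bigr => m _; rewrite f0 !mul0r.
have qfix v : v \in NB w -> q v = v.
  move=> vN; have vk : v != k by apply: contraNneq kN => <-.
  by have [h _] := vq v vk; exact: h.
pose rb x := `[< reach q (NB w) x >].
pose gq x := gind q S x.
pose Wk := \prod_(v | (v \notin NB w) && (v != k)) w (q v) v.
pose c m := if (m != k) && rb m then w m k else 0.
pose b := \sum_j (if (j != k) && ~~ rb j then w j k else 0).
pose A := \sum_j c j * gq j.
have Hf m : is_forest w (upd q k m) = gedge w k m && rb m.
  apply/idP/idP.
    by move/(forest_upd m kN qk) => [_ [g r]]; rewrite g; apply/asboolP.
  by case/andP=> g /asboolP r; apply/(forest_upd m kN qk).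
have HW m : Wf w (upd q k m) = w m k * Wk.
  rewrite /Wf (bigD1 k) //= updE eqxx; congr (_ * _).
  by apply: eq_bigr => v /andP[_ vk]; rewrite updE (negbTE vk).
have Hg m j : reach q (NB w) m -> gind (upd q k m) S j = if rb j then gq j else gq m.
  move=> rm; rewrite /gind /gq /rb.
  case: (reach_U (rq j)) => rj.
    rewrite (asboolT rj) /gind; congr (_%:R).
    by by rewrite (asbool_iff (L1a m S qk kN qfix rj)).
  case: (asboolP (reach q (NB w) j)) => rj'.
    by congr (_%:R); by rewrite (asbool_iff (L1a m S qk kN qfix rj')).
  congr (_%:R); congr (nat_of_bool _); apply: asbool_iff; split => H.
    by apply/(L1a m S qk kN qfix rm); apply/(L1b m qk kN qfix sS rj).
  by apply/(L1b m qk kN qfix sS rj); apply/(L1a m S qk kN qfix rm).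
have cE m : (is_forest w (upd q k m))%:R * w m k = c m.
  rewrite Hf /c /gedge; case: (m != k); case: (rb m); rewrite /= ?andbF ?andbT ?mul0r //.
  by have [->|_] := eqVneq (w m k) 0; rewrite ?mul0r ?mulr0 ?mul1r.
have sumE (m : 'I_n) : reach q (NB w) m ->
   \sum_(j | j != k) w j k * gind (upd q k m) S j = A + b * gq m.
  move=> rm; rewrite big_mkcond /A /b mulr_suml -big_split; apply: eq_bigr => j _ /=.
  rewrite (Hg _ _ rm) /c; case: (j != k) => /=; last by rewrite !mul0r addr0.
  by case: (rb j) => /=; rewrite ?mul0r ?addr0 ?add0r.
have dE : \sum_(j | j != k) w j k = \sum_j c j + b.
  rewrite big_mkcond /b -big_split; apply: eq_bigr => j _ /=; rewrite /c.
  by case: (j != k); case: (rb j); rewrite /= ?addr0 ?add0r.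
have gk m : reach q (NB w) m -> gind (upd q k m) S k = gq m.
  by move=> rm; rewrite Hg // /rb (asboolF (reach_noK qk kN)).
have L m : (is_forest w (upd q k m))%:R *
     (Wf w (upd q k m) * \sum_(j | j != k) w j k * gind (upd q k m) S j)
     = Wk * (c m * (A + b * gq m)).
  have [rm|rm] := asboolP (reach q (NB w) m).
    by rewrite sumE // HW -(cE m); ring.
  have -> : is_forest w (upd q k m) = false by rewrite Hf /rb (asboolF rm) andbF.
  by rewrite /c /rb (asboolF rm) andbF !mul0r mulr0.
have Rm m : (is_forest w (upd q k m))%:R *
     (Wf w (upd q k m) * ((\sum_(j | j != k) w j k) * gind (upd q k m) S k))
     = Wk * (c m * ((\sum_j c j + b) * gq m)).
  have [rm|rm] := asboolP (reach q (NB w) m).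
    by rewrite gk // HW dE -(cE m); ring.
  have -> : is_forest w (upd q k m) = false by rewrite Hf /rb (asboolF rm) andbF.
  by rewrite /c /rb (asboolF rm) andbF !mul0r mulr0.
rewrite (eq_bigr _ (fun m _ => L m)) (eq_bigr _ (fun m _ => Rm m)).
rewrite -!mulr_sumr; congr (_ * _).
under eq_bigr do rewrite mulrDr.
rewrite big_split /= -mulr_suml.
under [in RHS]eq_bigr do rewrite mulrDl mulrDr.
rewrite big_split /=.
have E1 : \sum_i c i * ((\sum_j c j) * gq i) = (\sum_j c j) * A.
  by rewrite /A mulr_sumr; apply: eq_bigr => i _; rewrite mulrCA.
have E2 : \sum_i c i * (b * gq i) = b * A.
  by rewrite /A mulr_sumr; apply: eq_bigr => i _; rewrite mulrCA.
by rewrite E1 !E2.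
Qed.

End Ident.

Section Basins.
Variable R : realType.
Variable n : nat.
Variable w : 'I_n -> 'I_n -> R.

Definition SCC x := [set y | connect (gedge w) x y && connect (gedge w) y x].

Lemma basin_def S : S \in basins w -> exists x, S = SCC x.
Proof. by rewrite inE => /andP[/existsP[x /eqP ->] _]; exists x. Qed.

Lemma basin_closed S k j : S \in basins w -> k \in S -> gedge w k j -> j \in S.
Proof.
rewrite inE => /andP[_ /forallP H] kS kj.
by move: (H k); rewrite kS /= => /forallP /(_ j) /implyP; apply.
Qed.

Lemma SCC_eq x r : r \in SCC x -> SCC r = SCC x.
Proof.
rewrite inE => /andP[xr rx]; apply/setP => y; rewrite !inE.
apply/andP/andP => [[ry yr]|[xy yx]]; split.
- exact: connect_trans xr ry.
- exact: connect_trans yr rx.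
- exact: connect_trans rx xy.
- exact: connect_trans yx xr.
Qed.

Lemma basin_uniq S S' r : S \in basins w -> S' \in basins w -> r \in S -> r \in S' -> S = S'.
Proof.
move=> /basin_def[x ->] /basin_def[x' ->] h1 h2.
by rewrite -(SCC_eq h1) -(SCC_eq h2).
Qed.

Lemma basin_conn S r r' : S \in basins w -> r \in S -> r' \in S -> connect (gedge w) r r'.
Proof.
move=> /basin_def[x ->]; rewrite !inE => /andP[_ rx] /andP[xr' _].
exact: connect_trans rx xr'.
Qed.

Lemma basin_NB S r : S \in basins w -> r \in S -> r \in NB w.
Proof. by move=> SB rS; apply/bigcupP; exists S. Qed.

Lemma NB_basin r : r \in NB w -> exists2 S, S \in basins w & r \in S.
Proof. by case/bigcupP=> S SB rS; exists S. Qed.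

Lemma reach_basin v : exists S, exists2 r, (S \in basins w) && (r \in S) & connect (gedge w) v r.
Proof.
pose P x := connect (gedge w) v x.
pose F x := #|[set y | connect (gedge w) x y]|.
have := @arg_minnP _ v P F (connect0 _ v).
case=> u Pu Hmin.
have back y : connect (gedge w) u y -> connect (gedge w) y u.
  move=> uy.
  have sub : [set z | connect (gedge w) y z] \subset [set z | connect (gedge w) u z].
    by apply/fintype.subsetP => z; rewrite !inE => yz; exact: connect_trans uy yz.
  have ce : #|[set z | connect (gedge w) y z]| = #|[set z | connect (gedge w) u z]|.
    apply/eqP; rewrite eqn_leq subset_leq_card //=.
    exact: (Hmin y (connect_trans Pu uy)).
  by have := elimT (subset_cardP ce) sub u; rewrite !inE connect0 => ->.
exists (SCC u); exists u; last by [].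
rewrite !inE connect0 /= andbT; apply/andP; split.
  by apply/existsP; exists u.
apply/forallP => k; apply/implyP; rewrite inE => /andP[uk ku].
apply/forallP => j; apply/implyP => kj; rewrite inE.
have uj : connect (gedge w) u j by apply: connect_trans uk (connect1 kj).
by rewrite uj back.
Qed.

End Basins.

Section Pos.
Variable R : realType.
Variable n : nat.
Variable w : 'I_n -> 'I_n -> R.
Hypothesis w_ge0 : forall j k, 0 <= w j k.

Fixpoint Nset t : {set 'I_n} :=
  if t is t'.+1 then Nset t' :|: [set v | [exists u in Nset t', gedge w v u]]
  else NB w.

Lemma Nset_all v : exists t, v \in Nset t.
Proof.
have [S [r /andP[SB rS] /connectP[s]]] := reach_basin w v.
elim: s v => [|z s IH] v /=.
  by move=> _ er; exists 0%N; rewrite /= -er; exact: basin_NB SB rS.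
case/andP=> vz pth lr; have [t zt] := IH z pth lr.
by exists t.+1; rewrite /= inE; apply/orP; right; rewrite inE; apply/existsP; exists z; rewrite zt.
Qed.

Definition lvl v := ex_minn (Nset_all v).

Lemma lvl_step v : v \notin NB w -> exists u, gedge w v u && (lvl u < lvl v)%N.
Proof.
move=> vN; rewrite /lvl; case: ex_minnP => t vt tmin.
destruct t as [|t]; first by move: vt; rewrite /= (negbTE vN).
move: vt; rewrite /= inE => /orP[vt|]; first by have := tmin t vt; rewrite ltnn.
rewrite inE => /existsP[u /andP[ut vu]]; exists u; rewrite vu /=.
case: ex_minnP => s us smin; exact: smin.
Qed.

Definition p0 : {ffun 'I_n -> 'I_n} :=
  [ffun v => if v \in NB w then v else odflt v [pick u | gedge w v u && (lvl u < lvl v)%N]].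

Lemma p0_step v : v \notin NB w -> gedge w v (p0 v) && (lvl (p0 v) < lvl v)%N.
Proof.
move=> vN; rewrite ffunE (negbTE vN); case: pickP => [u //|H].
by have [u Hu] := lvl_step vN; move: (H u); rewrite Hu.
Qed.

Lemma p0_forest : is_forest w p0.
Proof.
apply/forestP; split.
  move=> v; split; first by move=> vN; rewrite ffunE vN.
  by move=> vN; case/andP: (p0_step vN).
move=> v; have : (lvl v < (lvl v).+1)%N by [].
elim: (lvl v).+1 {-2}v => // N IH {}v vN.
have [vB|vB] := boolP (v \in NB w); first exact: reach0.
apply: reachS; case/andP: (p0_step vB) => _ lt; apply: IH.
exact: leq_trans lt vN.
Qed.

Lemma Wf_ge0 p : 0 <= Wf w p.
Proof. by apply: prodr_ge0 => v _. Qed.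

Lemma Wf_gt0 p : is_forest w p -> 0 < Wf w p.
Proof.
move/forestP => [vp _]; apply: prodr_gt0 => v vN.
have [_ h] := vp v; move: (h vN) => /andP[_ nz].
by rewrite lt_def nz w_ge0.
Qed.

Definition Zs := \sum_(t in TB w) Wf w t.

Lemma Zs_gt0 : 0 < Zs.
Proof.
rewrite /Zs (bigD1 p0) ?inE ?p0_forest //=.
apply: (lt_le_trans (Wf_gt0 p0_forest)); rewrite lerDl.
by apply: sumr_ge0 => p _; exact: Wf_ge0.
Qed.

End Pos.

Section Kappa.
Variable R : realType.
Variable n : nat.
Variable w : 'I_n -> 'I_n -> R.

Definition Fk (S : {set 'I_n}) j := \sum_(p in TB w) Wf w p * gind R p S j.

Lemma cvTB (f : {ffun 'I_n -> 'I_n} -> R) :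
  \sum_(p in TB w) f p = \sum_p (is_forest w p)%:R * f p.
Proof.
rewrite big_mkcond; apply: eq_bigr => p _; rewrite inE.
by case: (is_forest w p); rewrite ?mul1r ?mul0r.
Qed.

Lemma harm_trans k (S : {set 'I_n}) : k \notin NB w -> S \subset NB w ->
  \sum_(j | j != k) w j k * Fk S j = (\sum_(j | j != k) w j k) * Fk S k.
Proof.
move=> kN sS; rewrite /Fk.
under eq_bigr do rewrite cvTB mulr_sumr.
rewrite exchange_big /= cvTB mulr_sumr.
have -> : \sum_p \sum_(i | i != k) w i k * ((is_forest w p)%:R * (Wf w p * gind R p S i))
   = \sum_p (is_forest w p)%:R * (Wf w p * \sum_(j | j != k) w j k * gind R p S j).
  apply: eq_bigr => p _; rewrite !mulr_sumr; apply: eq_bigr => j _; ring.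
have -> : \sum_p (\sum_(j | j != k) w j k) * ((is_forest w p)%:R * (Wf w p * gind R p S k))
   = \sum_p (is_forest w p)%:R * (Wf w p * ((\sum_(j | j != k) w j k) * gind R p S k)).
  by apply: eq_bigr => p _; ring.
rewrite (sum_upd (fun p => (is_forest w p)%:R * (Wf w p * \sum_(j | j != k) w j k * gind R p S j)) k).
rewrite (sum_upd (fun p => (is_forest w p)%:R * (Wf w p * ((\sum_(j | j != k) w j k) * gind R p S k))) k).
apply: eq_bigr => q /eqP qk; exact: per_q.
Qed.

Lemma evecE (j i : 'I_n) : evec R j i 0 = (i == j)%:R.
Proof. by rewrite /evec mxE eqxx andbT. Qed.

Lemma sum_ind (P : pred 'I_n) (f : 'I_n -> R) i :
  \sum_(j | P j) f j * (i == j)%:R = if P i then f i else 0.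
Proof.
rewrite big_mkcond (bigD1 i) //= eqxx mulr1 big1 ?addr0 => [|j ji].
  by case: (P i).
by rewrite eq_sym (negbTE ji) mulr0; case: (P j).
Qed.

Lemma kappaE (S : {set 'I_n}) i : kappa w S i 0 =
  Zs w * (i \in S)%:R + (if i \in NB w then 0 else \sum_(t in TBl w S i) Wf w t).
Proof.
rewrite /kappa !mxE !summxE; congr (_ * _ + _).
  have := sum_ind (fun j => j \in S) (fun _ => 1) i.
  under eq_bigr do rewrite mul1r.
  move=> H; rewrite (eq_bigr (fun j => (i == j)%:R)) ?H; first by case: (i \in S).
  by move=> j _; rewrite evecE.
rewrite (eq_bigr (fun l => (\sum_(t in TBl w S l) Wf w t) * (i == l)%:R)) => [|l _]; last first.
  by rewrite !mxE eqxx andbT.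
by rewrite sum_ind; case: (i \in NB w).
Qed.

Lemma kappa_F (S : {set 'I_n}) i : S \subset NB w -> kappa w S i 0 = Fk S i.
Proof.
move=> sS; rewrite kappaE /Fk /Zs.
have [iN|iN] := boolP (i \in NB w).
  rewrite addr0 mulr_suml; apply: eq_bigr => p; rewrite inE => /forestP[vp _].
  have [pi _] := vp i; have pii := pi iN.
  congr (_ * _); rewrite /gind; congr (_%:R); congr (nat_of_bool _).
  apply/idP/asboolP => [iS|]; first exact: reach0.
  by move/reach_fix; apply.
have iS : i \notin S by apply/negP => iS; move: iN; rewrite (fintype.subsetP sS i iS).
rewrite (negbTE iS) mulr0 add0r.
rewrite big_mkcond [RHS]big_mkcond; apply: eq_bigr => p _; rewrite !inE.
case F: (is_forest w p) => //=.
have vp : valid w p by case/forestP: F.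
rewrite /gind; case: ifP => H.
  move: H => /existsP[r /andP[rS c]].
  have : reach p S i by apply/(reach_conn i vp sS); exists r.
  by move/asboolT => ->; rewrite mulr1.
rewrite asboolF ?mulr0 // => /(reach_conn i vp sS)[r rS c].
by move: H => /negbT /negP; apply; apply/existsP; exists r; rewrite rS c.
Qed.

End Kappa.

Section Main.
Variable R : realType.
Variable n : nat.
Variable w : 'I_n -> 'I_n -> R.
Hypothesis w_ge0 : forall j k, 0 <= w j k.

Lemma OmTE (y : 'cV[R]_n) k :
  ((Omega w)^T *m y) k 0 = \sum_(j | j != k) w j k * (y j 0 - y k 0).
Proof.
rewrite !mxE (bigD1 k) //= !mxE eqxx.
rewrite [RHS](eq_bigr (fun j => w j k * y j 0 - w j k * y k 0)); last by move=> j _; rewrite mulrBr.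
rewrite sumrB -mulr_suml mulNr addrC; congr (_ + _).
by apply: eq_bigr => j jk; rewrite !mxE (negbTE jk).
Qed.

Lemma kappa_harm S k : S \in basins w -> ((Omega w)^T *m kappa w S) k 0 = 0.
Proof.
move=> SB; have sS : S \subset NB w by apply/fintype.subsetP => r; exact: basin_NB.
rewrite OmTE; have [kN|kN] := boolP (k \in NB w).
  have [S' S'B kS'] := NB_basin kN.
  apply: big1 => j jk; have [->|wz] := eqVneq (w j k) 0; first by rewrite mul0r.
  have kj : gedge w k j by rewrite /gedge jk wz.
  have jS' := basin_closed S'B kS' kj.
  rewrite !kappaE kN (basin_NB S'B jS') !addr0.
  have -> : (j \in S) = (k \in S).
    apply/idP/idP => H.
      by rewrite (basin_uniq SB S'B H jS').
    by rewrite (basin_uniq SB S'B H kS').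
  by rewrite subrr mulr0.
under eq_bigr do rewrite !kappa_F //.
rewrite (eq_bigr (fun j => w j k * Fk w S j - w j k * Fk w S k)); last by move=> j _; rewrite mulrBr.
by rewrite sumrB -mulr_suml harm_trans // subrr.
Qed.

Lemma max_step (y : 'cV[R]_n) k j : (forall k, ((Omega w)^T *m y) k 0 = 0) ->
  (forall i, y i 0 <= y k 0) -> gedge w k j -> y j 0 = y k 0.
Proof.
move=> H M /andP[jk wz].
have E : \sum_(j | j != k) w j k * (y k 0 - y j 0) = 0.
  have E1 : \sum_(j | j != k) w j k * (y k 0 - y j 0) =
    - \sum_(j | j != k) w j k * (y j 0 - y k 0).
    by rewrite -sumrN; apply: eq_bigr => i _; rewrite -mulrN opprB.
  by rewrite E1 -OmTE H oppr0.
have ge0 : forall i, i != k -> 0 <= w i k * (y k 0 - y i 0).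
  by move=> i _; apply: mulr_ge0; [exact: w_ge0|rewrite subr_ge0].
have := psumr_eq0P ge0 E jk => /eqP; rewrite mulf_eq0 (negbTE wz) /= subr_eq0.
by move=> /eqP ->.
Qed.


Lemma max_conn (y : 'cV[R]_n) u v : (forall k, ((Omega w)^T *m y) k 0 = 0) ->
  (forall i, y i 0 <= y u 0) -> connect (gedge w) u v -> y v 0 = y u 0.
Proof.
move=> H M /connectP[s]; elim: s u M => [|z s IH] u M /=; first by move=> _ ->.
case/andP=> uz pth lv; have e := max_step H M uz.
rewrite -e; apply: IH pth lv => i; rewrite e; exact: M.
Qed.

Lemma harm_le0 (y : 'cV[R]_n) : (forall k, ((Omega w)^T *m y) k 0 = 0) ->
  (forall S, S \in basins w -> exists2 r, r \in S & y r 0 = 0) ->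
  forall v, y v 0 <= 0.
Proof.
move=> H Z v.
have [u _ M] := @arg_maxP _ _ 'I_n v xpredT (fun i => y i 0) erefl.
have M' i : y i 0 <= y u 0 by exact: M.
have [S [r0 /andP[SB r0S] ur0]] := reach_basin w u.
have [r rS yr] := Z S SB.
have ur : connect (gedge w) u r by apply: connect_trans ur0 (basin_conn SB r0S rS).
by rewrite -yr (max_conn H M' ur); exact: M'.
Qed.

Lemma sum_kappa_at (c : {set 'I_n} -> R) S r : S \in basins w -> r \in S ->
  (\sum_(S' in basins w) c S' *: kappa w S') r 0 = c S * Zs w.
Proof.
move=> SB rS; have rN := basin_NB SB rS.
rewrite summxE (bigD1 S) //= big1 ?addr0.
  by rewrite mxE kappaE rN rS mulr1 addr0.
move=> S' /andP[S'B ne]; rewrite mxE kappaE rN addr0.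
have -> : (r \in S') = false.
  by apply/negP => rS'; move: ne; rewrite (basin_uniq S'B SB rS' rS) eqxx.
by rewrite mulr0 mulr0.
Qed.

Lemma basin_pick S : S \in basins w -> exists r, [pick x in S] = Some r /\ r \in S.
Proof.
move=> SB; case: pickP => [r rS|H]; first by exists r.
have [x ex] := basin_def SB; have := H x; rewrite ex inE !connect0.
by [].
Qed.

Lemma kernel_span (x : 'cV[R]_n) : (Omega w)^T *m x = 0 ->
  exists c : {set 'I_n} -> R, x = \sum_(S in basins w) c S *: kappa w S.
Proof.
move=> Hx.
have Zn0 : Zs w != 0 by rewrite gt_eqF // Zs_gt0.
pose c (S : {set 'I_n}) := if [pick r in S] is Some r then x r 0 / Zs w else 0.
exists c.
pose y := x - \sum_(S in basins w) c S *: kappa w S.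
have Kh S : S \in basins w -> (Omega w)^T *m kappa w S = 0.
  by move=> SB; apply/matrixP => i j; rewrite (ord1 j) kappa_harm // mxE.
have Hy : (Omega w)^T *m y = 0.
  rewrite mulmxBr Hx mulmx_sumr big1 ?subrr // => S SB.
  by rewrite -scalemxAr Kh // scaler0.
have Hy' k : ((Omega w)^T *m y) k 0 = 0 by rewrite Hy mxE.
have Hny k : ((Omega w)^T *m (- y)) k 0 = 0 by rewrite mulmxN Hy oppr0 mxE.
have yz S : S \in basins w -> exists2 r, r \in S & y r 0 = 0.
  move=> SB; have [r [pr rS]] := basin_pick SB; exists r => //.
  rewrite /y mxE [X in _ + X]mxE (sum_kappa_at c SB rS) /c pr.
  by rewrite divfK // subrr.
have nyz S : S \in basins w -> exists2 r, r \in S & (- y) r 0 = 0.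
  by move=> SB; have [r rS yr] := yz S SB; exists r => //; rewrite mxE yr oppr0.
have y0 : y = 0.
  apply/matrixP => i j; rewrite (ord1 j).
  have -> : (0 : 'cV[R]_n) i 0 = 0 by rewrite mxE.
  apply/eqP; rewrite eq_le.
  rewrite (harm_le0 Hy' yz) /=.
  by have := harm_le0 Hny nyz i; rewrite mxE oppr_le0.
by apply/eqP; rewrite -subr_eq0 -/y y0.
Qed.

Lemma kappa_indep (c : {set 'I_n} -> R) :
  \sum_(S in basins w) c S *: kappa w S = 0 -> forall S, S \in basins w -> c S = 0.
Proof.
move=> H S SB; have [r [_ rS]] := basin_pick SB.
have := sum_kappa_at c SB rS; rewrite H mxE => /esym/eqP.
by rewrite mulf_eq0 (gt_eqF (Zs_gt0 w_ge0)) orbF => /eqP.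
Qed.

End Main.

Section Wpos.
Local Open Scope complex_scope.
Variable R : realType.
Variable n : nat.

Lemma adjmxM (A B : 'M[R[i]]_n) : adjmx (A *m B) = adjmx B *m adjmx A.
Proof. by rewrite /adjmx map_mxM trmx_mul. Qed.

Lemma adjmxK (A : 'M[R[i]]_n) : adjmx (adjmx A) = A.
Proof.
by apply/matrixP => i j; rewrite /adjmx !mxE conjcK.
Qed.

Lemma tr_adj_ge0 (M : 'M[R[i]]_n) : 0 <= complex.Re (\tr (M *m adjmx M)).
Proof.
have : 0 <= \tr (M *m adjmx M).
  rewrite /mxtrace; apply: sumr_ge0 => i _; rewrite mxE; apply: sumr_ge0 => j _.
  by rewrite /adjmx !mxE; exact: mulcJ_ge0.
by rewrite lecE => /andP[_].
Qed.

Lemma wgt_ge0 N (L : 'I_N -> 'M[R[i]]_n) (pi : 'I_n -> 'M[R[i]]_n) :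
  (forall j, pi j *m pi j = pi j) -> (forall j, adjmx (pi j) = pi j) ->
  forall j k, 0 <= wgt L pi j k.
Proof.
move=> proj herm j k; rewrite /wgt; apply: sumr_ge0 => a _.
set P := pi j; set Q := pi k; set A := L a.
have PP : P *m P = P by exact: proj.
have QQ : Q *m Q = Q by exact: proj.
have -> : \tr (P *m A *m Q *m adjmx A) = \tr ((P *m A *m Q) *m adjmx (P *m A *m Q)).
  rewrite !adjmxM (herm j) (herm k) -/P -/Q !mulmxA [RHS]mxtrace_mulC !mulmxA PP.
  by rewrite -(mulmxA _ Q Q) QQ.
exact: tr_adj_ge0.
Qed.

End Wpos.

Lemma conserved (R : realType) n (Om : 'M[R]_n) (kap : 'cV[R]_n) (Lam : R -> 'cV[R]_n) :
  Om^T *m kap = 0 ->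
  (forall t (j : 'I_n), is_derive t (1 : R) (fun s => Lam s j ord0) ((Om *m Lam t) j ord0)) ->
  forall s t, kap^T *m Lam s = kap^T *m Lam t.
Proof.
move=> K D.
pose h (j : 'I_n) := fun s : R => kap j 0 * Lam s j 0.
pose f := \sum_(j < n) h j.
have Hf s : f s = (kap^T *m Lam s) 0 0.
  rewrite /f fct_sumE mxE; apply: eq_bigr => j _; by rewrite mxE.
have Dh t j : is_derive t (1 : R) (h j) (kap j 0 * (Om *m Lam t) j 0).
  have := is_deriveZ (kap j 0) (D t j).
  by [].
have Df t : is_derive t (1 : R) f 0.
  have := is_derive_sum (Dh t).
  suff -> : \sum_(i < n) kap i 0 * (Om *m Lam t) i 0 = 0 by [].
  have -> : \sum_(i < n) kap i 0 * (Om *m Lam t) i 0 = (kap^T *m (Om *m Lam t)) 0 0.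
    by rewrite [RHS]mxE; apply: eq_bigr => i _; rewrite [in RHS]mxE.
  by rewrite mulmxA -[Om]trmxK -trmx_mul K trmx0 mul0mx mxE.
move=> s t; apply/matrixP => i j; rewrite (ord1 i) (ord1 j) -!Hf.
exact: is_derive_0_is_cst.
Qed.

Unset Implicit Arguments.
Set Strict Implicit.

Theorem mainTheorem4 (R : realType) (n N : nat) (n_gt0 : (0 < n)%N)
    (L : 'I_N -> 'M[R[i]]_n) (pi : 'I_n -> 'M[R[i]]_n)
    (pi_proj : forall j, pi j *m pi j = pi j)
    (pi_herm : forall j, adjmx (pi j) = pi j)
    (pi_rank1 : forall j, \rank (pi j) = 1%N)
    (pi_orth : forall j k, j != k -> pi j *m pi k = 0) :
  let w := wgt L pi in
  let Om := Omega w in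
  (* the kappa_eta span ker Omega^T *)
  (forall x : 'cV[R]_n, Om^T *m x = 0 <->
     exists c : {set 'I_n} -> R, x = \sum_(S in basins w) c S *: kappa w S)
  (* the kappa_eta are linearly independent *)
  /\ (forall c : {set 'I_n} -> R,
        \sum_(S in basins w) c S *: kappa w S = 0 ->
        forall S, S \in basins w -> c S = 0)
  (* conserved quantities *)
  /\ (forall Lam : R -> 'cV[R]_n,
        (forall t (j : 'I_n), is_derive t (1 : R) (fun s => Lam s j ord0)
                                         ((Om *m Lam t) j ord0)) ->
        forall S, S \in basins w ->
        forall s t, (kappa w S)^T *m Lam s = (kappa w S)^T *m Lam t).
Proof.
Proof.
move=> w Om.
have w_ge0 : forall j k, 0 <= w j k by exact: wgt_ge0.
have Kh S : S \in basins w -> Om^T *m kappa w S = 0.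
  by move=> SB; apply/matrixP => i j; rewrite (ord1 j) kappa_harm // mxE.
split; [|split].
- move=> x; split; first exact: kernel_span.
  case=> c ->; rewrite mulmx_sumr big1 // => S SB.
  by rewrite -scalemxAr Kh // scaler0.
- exact: kappa_indep.
- move=> Lam D S SB s t; exact: (conserved (Kh S SB) D).
Qed.
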